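(* If $b > a \geq 2$, then $I_{a,b} \geq P_a(a+b-1) \cdot P_b(a+b-1)$.
   Context: $K_{a,b}$ is the complete bipartite graph with partite sets of sizes $a$ and $b$. $I_{a,b}$ denotes the number of isomorphism classes (as unlabeled graphs) of spanning trees of $K_{a,b}$. $P_k(m)$ denotes the number of integer partitions of $m$ into exactly $k$ positive parts. *)

(* Defs.v *)
From mathcomp Require Import all_boot.
From mathcomp Require Import fingroup perm boolp.
Set Implicit Arguments. Unset Strict Implicit. Unset Printing Implicit Defensive.

Definition Kvert (a b : nat) : finType := ('I_a + 'I_b)%type.

(* A subgraph of K_{a,b} on all vertices is given by its edge set, a subset of
   the edge set 'I_a * 'I_b of K_{a,b} (edge (i,j) joins inl i and inr j). *)
Definition Kedges (a b : nat) : finType := ('I_a * 'I_b)%type.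

Definition adjK (a b : nat) (E : {set Kedges a b}) : rel (Kvert a b) :=
  fun u v =>
    match u, v with
    | inl i, inr j => (i, j) \in E
    | inr j, inl i => (i, j) \in E
    | _, _ => false
    end.

Definition connected_graph (V : finType) (e : rel V) : bool :=
  [forall u, forall v, connect e u v].

Definition acyclic_graph (V : finType) (e : rel V) : Prop :=
  forall c : seq V, 2 < size c -> ~~ ucycleb e c.

Definition is_tree (V : finType) (e : rel V) : Prop :=
  connected_graph e /\ acyclic_graph e.

Definition spanning_tree (a b : nat) (E : {set Kedges a b}) : Prop :=
  is_tree (adjK E).

(* isomorphism as unlabeled graphs: a bijection of the whole vertex set
   (not required to preserve the bipartition) preserving adjacency *)
Definition graph_iso (V : finType) (e1 e2 : rel V) : Prop :=
  exists f : {perm V}, forall u v, e1 u v = e2 (f u) (f v).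

Definition Iab (a b : nat) : nat :=
  #|[set [set E' : {set Kedges a b} | `[< spanning_tree E' >] &&
                                      `[< graph_iso (adjK E) (adjK E') >]]
     | E : {set Kedges a b} in [set E | `[< spanning_tree E >]]]|.

Definition Ppart (k m : nat) : nat :=
  #|[set t : k.-tuple 'I_m.+1 |
      [&& sorted geq (map val t), all (fun x : 'I_m.+1 => 0 < val x) t
        & sumn (map val t) == m]]|.

(* Main.v *)
Require Import Defs.
From mathcomp Require Import all_boot.
From mathcomp Require Import fingroup perm boolp zify.
Set Implicit Arguments. Unset Strict Implicit. Unset Printing Implicit Defensive.
Lemma card_ord_count n (P : pred nat) : #|[pred j : 'I_n | P (val j)]| = count P (iota 0 n).
Proof. by rewrite cardE /enum_mem size_filter -enumT -val_enum_ord count_map. Qed.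

Fixpoint flatr (cs : seq nat) (k : nat) : seq nat :=
  if cs is c :: cs' then nseq c k ++ flatr cs' k.+1 else [::].

Lemma size_flatr cs k : size (flatr cs k) = sumn cs.
Proof. by elim: cs k => //= c cs IH k; rewrite size_cat size_nseq IH. Qed.

Lemma count_flatr cs k x :
  count (pred1 x) (flatr cs k) = if k <= x then nth 0 cs (x - k) else 0.
Proof.
elim: cs k => [|c cs IH] k /=; first by case: ifP => //; rewrite nth_nil.
rewrite count_cat count_nseq IH /=.
case: (ltngtP k x) => [lt|lt|->].
- rewrite mul0n add0n.
  by have ->: x - k = (x - k.+1).+1 by lia.
- by rewrite mul0n.
- by rewrite mul1n subnn addn0.
Qed.

Lemma nth_flatr cs k t x : t < sumn cs ->
  (nth 0 (flatr cs k) t < x) = (t < sumn (take (x - k) cs)).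
Proof.
elim: cs k t => [|c cs IH] k t //= Ht.
rewrite nth_cat size_nseq.
case: (ltnP t c) => Htc.
  rewrite nth_nseq Htc.
  case: (ltnP k x) => Hkx.
    rewrite -(subnSK Hkx) /=; lia.
  have ->: x - k = 0 by lia.
  rewrite /=; lia.
rewrite IH; last by lia.
case: (ltnP k x) => Hkx.
  rewrite -(subnSK Hkx) /= subnS; lia.
have ->: x - k.+1 = 0 by lia.
have ->: x - k = 0 by lia.
by rewrite take0 /= !ltn0.
Qed.


Lemma seq_max (T : eqType) (rk : T -> nat) (s : seq T) : s != [::] ->
  exists2 v, v \in s & forall w, w \in s -> rk w <= rk v.
Proof.
elim: s => [|x s IH] // _.
case: s IH => [|y s] IH.
  by exists x => [|w]; rewrite ?inE // => /eqP->.
have [v vin vmax] := IH isT.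
case: (leqP (rk x) (rk v)) => H.
  exists v; first by rewrite inE vin orbT.
  by move=> w; rewrite inE => /orP[/eqP->|/vmax].
exists x; first by rewrite inE eqxx.
move=> w; rewrite inE => /orP[/eqP->//|/vmax H2]; exact: leq_trans H2 (ltnW H).
Qed.

Lemma rank_tree (V : finType) (e : rel V) (r : V) (rk : V -> nat) :
  symmetric e ->
  (forall v w, e v w -> rk v != rk w) ->
  (forall v, v != r -> exists2 w, e v w & rk w < rk v) ->
  (forall v w1 w2, e v w1 -> e v w2 -> rk w1 < rk v -> rk w2 < rk v -> w1 = w2) ->
  is_tree e.
Proof.
move=> esym Hne Hdown Huniq; split.
  have Hr: forall n v, rk v <= n -> connect e v r.
    elim=> [|n IH] v Hv.
      case: (eqVneq v r) => [->|/Hdown [w _]]; first exact: connect0.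
      by rewrite ltnNge (leq_trans Hv).
    case: (eqVneq v r) => [->|/Hdown [w evw rw]]; first exact: connect0.
    apply: connect_trans (connect1 evw) (IH w _); lia.
  apply/forallP => u; apply/forallP => v.
  apply: connect_trans (Hr _ u (leqnn _)) _.
  rewrite (sym_connect_sym esym); exact: Hr _ v (leqnn _).
move=> c Hc; apply/negP => /andP[Hcyc Hu].
have cne : c != [::] by move: Hc; case: (c).
have [v vin vmax] := seq_max rk cne.
case: (rot_to vin) => i s' Hrot.
have := rot_cycle i e c; rewrite Hrot Hcyc => Hcyc'.
have := rot_uniq i c; rewrite Hrot Hu => Hu'.
have Hs': size s' = (size c).-1 by rewrite -(size_rot i c) Hrot.
have mem' : forall w, w \in s' -> w \in c.
  by move=> w ws; rewrite -(mem_rot i) Hrot inE ws orbT.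
case: s' Hrot Hcyc' Hu' Hs' mem' => [|w1 [|y t]] Hrot Hcyc' Hu' Hs' mem'; try (simpl in Hs'; lia).
move: Hcyc'; rewrite /path.cycle rcons_path /= => /andP[/andP[e1 _] e2].
set wl := last y t in e2.
have wlin : wl \in y :: t by exact: mem_last.
have r1 : rk w1 < rk v.
  by rewrite ltn_neqAle eq_sym Hne // vmax // mem' // inE eqxx.
have r2 : rk wl < rk v.
  rewrite ltn_neqAle Hne //= vmax // mem' // inE wlin orbT.
  by [].
have e2' : e v wl by rewrite esym.
have := Huniq v w1 wl e1 e2' r1 r2.
move: Hu' => /= /andP[_ /andP[Hw1 _]] Heq.
by move: Hw1; rewrite Heq wlin.
Qed.

Lemma sumn_pred s : all (fun x => 0 < x) s -> sumn (map predn s) + size s = sumn s.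
Proof. elim: s => //= x s IH /andP[x0 /IH <-]; lia. Qed.

Lemma geq_all x s : path geq x s -> all (fun y => y <= x) s.
Proof.
move=> H; have := order_path_min (leT := geq) _ H.
by apply; move=> u v w /= H1 H2; exact: leq_trans H2 H1.
Qed.

Lemma sum_take_min s i : sorted geq s -> all (fun x => 0 < x) s ->
  minn i (sumn (map predn s)) <= sumn (take i (map predn s)).
Proof.
elim: s i => [|x s IH] i; first by rewrite /= minn0.
case: i => [|i] /= Hs /andP[x0 Hall]; first by rewrite min0n.
have Hs' := path_sorted Hs.
have := IH i Hs' Hall.
case: x x0 Hs => [|[|x]] // _ Hs.
  have Hle := geq_all Hs.
  have H1 : all (fun y => y == 1) s.
    apply/allP => y ys; move/allP: Hle => /(_ y ys); move/allP: Hall => /(_ y ys); lia.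
  have -> : sumn (map predn s) = 0.
    by elim: s H1 {IH Hs Hs' Hle Hall} => //= z s IHs /andP[/eqP-> /IHs->].
  lia.
lia.
Qed.

Lemma sum_take_ge s k : sorted geq s -> 2 <= nth 0 s k ->
  k <= sumn (take k (map predn s)).
Proof.
elim: s k => [|x s IH] k; first by rewrite nth_nil.
case: k => [|k] //=.
move=> Hs Hk.
have Hks : k < size s by case: (ltnP k (size s)) Hk => // H; rewrite nth_default.
have := IH k (path_sorted Hs) Hk.
have Hle := geq_all Hs.
have : nth 0 s k <= x by move/allP: Hle; apply; exact: mem_nth.
lia.
Qed.

Definition csB (q : seq nat) := if q is x :: q' then x :: map predn q' else [::].
Definition alphaf (a : nat) (p : seq nat) (j : nat) := nth 0 (a :: flatr (map predn p) 0) j.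
Definition betaf (q : seq nat) (i : nat) := nth 0 (flatr (csB q) 0) i.

Record goodpq (a b : nat) (p q : seq nat) : Prop := Good {
  g_sp : size p = a; g_sq : size q = b; g_op : sorted geq p; g_oq : sorted geq q;
  g_pp : all (fun x => 0 < x) p; g_pq : all (fun x => 0 < x) q;
  g_Sp : sumn p = a + b - 1; g_Sq : sumn q = a + b - 1;
  g_a : 1 <= a; g_ab : a < b }.

Lemma sum_csA a b p q : goodpq a b p q -> sumn (map predn p) = b - 1.
Proof. move=> G; have := sumn_pred (g_pp G); rewrite (g_sp G) (g_Sp G); lia. Qed.

Lemma sum_csB a b p q : goodpq a b p q -> sumn (csB q) = a.
Proof.
move=> G; have := g_ab G; have := g_sq G; have := g_pq G; have := g_Sq G.
case: q {G} => [|x q'] /=; first lia.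
move=> Sq /andP[x0 Pq] Hq _; have := sumn_pred Pq; lia.
Qed.

Lemma size_csB a b p q : goodpq a b p q -> size (csB q) = b.
Proof. move=> G; have := g_sq G; by case: q {G} => //= x q'; rewrite size_map. Qed.

Lemma beta_lt a b p q i : goodpq a b p q -> i < a -> betaf q i < b.
Proof.
move=> G Hi; rewrite /betaf nth_flatr ?(sum_csB G) // subn0 take_oversize ?(size_csB G) //.
by rewrite (sum_csB G).
Qed.

Lemma alpha_lt a b p q j : goodpq a b p q -> 0 < j < b -> alphaf a p j < a.
Proof.
move=> G; case: j => [|j] //= Hj; rewrite nth_flatr ?(sum_csA G); last lia.
rewrite subn0 take_oversize ?size_map; last by rewrite (g_sp G).
rewrite (sum_csA G); lia.
Qed.

Lemma key a b p q i : goodpq a b p q -> i < a -> betaf q i != 0 -> alphaf a p (betaf q i) < i.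
Proof.
move=> G Hi Hj0.
have Hjb := beta_lt G Hi.
have H1 : i < sumn (take (betaf q i).+1 (csB q)).
  by rewrite -(subn0 (betaf q i).+1) -nth_flatr ?(sum_csB G).
have H2 : ~~ (i < sumn (take (betaf q i) (csB q))).
  by rewrite -(subn0 (betaf q i)) -nth_flatr ?(sum_csB G) // ltnn.
have SA := sum_csA G.
move: Hj0 Hjb H1 H2; set j := betaf q i.
case: j => [|j'] // _ Hjb.
have Sp := g_op G; have Pp := g_pp G.
move: (g_sq G) (g_oq G) (g_pq G) (g_Sq G); case: (q) => [|q0 q'] //= Hq Sq /andP[q00 Pq'] Sumq.
have Hj' : j' < size (map predn q') by rewrite size_map; lia.
have Hj'' : j' < size q' by rewrite size_map in Hj'.
rewrite (take_nth 0 Hj') sumn_rcons (nth_map 0 _ _ Hj'') => H1 H2.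
have Hnth : 2 <= nth 0 q' j' by lia.
have := sum_take_ge (path_sorted Sq) Hnth.
move=> H3.
rewrite /alphaf /= nth_flatr; last by rewrite SA; lia.
rewrite subn0.
have := sum_take_min i Sp Pp; rewrite SA.
lia.
Qed.

Definition Etree (a b : nat) (p q : seq nat) : {set Kedges a b} :=
  [set x : Kedges a b | (betaf q x.1 == x.2) || (alphaf a p x.2 == x.1)].

Definition rkT (a b : nat) (p : seq nat) (v : Kvert a b) : nat :=
  match v with
  | inl i => (2 * i).+1
  | inr j => if val j == 0 then 0 else (2 * alphaf a p j).+2
  end.

Lemma alpha0 a p : alphaf a p 0 = a.
Proof. by []. Qed.

Lemma disj a b p q (i j : nat) : goodpq a b p q -> i < a ->
  betaf q i = j -> alphaf a p j = i -> False.
Proof.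
move=> G Hi Hb Ha.
case: (eqVneq j 0) => [Hj|Hj].
  by move: Ha; rewrite Hj alpha0 => Ha; move: Hi; rewrite -Ha ltnn.
by have := key G Hi; rewrite Hb Ha ltnn => /(_ Hj).
Qed.

Lemma edgeA a b p q (i : 'I_a) (j : 'I_b) : goodpq a b p q ->
  (i, j) \in Etree a b p q -> @rkT a b p (inr j) < @rkT a b p (inl i) -> betaf q i = j.
Proof.
move=> G; rewrite inE /= => /orP[/eqP//|/eqP Ha].
case: (eqVneq (val j) 0) => [Hj|Hj] /=.
  by move: Ha; rewrite Hj alpha0 => Ha; move: (ltn_ord i); rewrite -Ha ltnn.
rewrite Ha; lia.
Qed.

Lemma edgeB a b p q (i : 'I_a) (j : 'I_b) : goodpq a b p q ->
  (i, j) \in Etree a b p q -> @rkT a b p (inl i) < @rkT a b p (inr j) -> alphaf a p j = i.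
Proof.
move=> G; rewrite inE /= => /orP[/eqP Hb|/eqP//].
case: (eqVneq (val j) 0) => [Hj|Hj] /=; first by rewrite Hj.
move=> Hr.
have := key G (ltn_ord i); rewrite Hb => /(_ Hj); lia.
Qed.

Lemma Etree_tree a b p q : goodpq a b p q -> spanning_tree (Etree a b p q).
Proof.
move=> G.
have b0 : 0 < b by have := g_ab G; lia.
apply: (@rank_tree _ _ (inr (Ordinal b0)) (@rkT a b p)).
- by move=> [u|u] [v|v].
- move=> [i|j] [i'|j'] //= _; case: ifP => _; lia.
- move=> [i|j] Hv.
    exists (inr (Ordinal (beta_lt G (ltn_ord i)))); first by rewrite /= inE /= eqxx.
    rewrite /=; case: ifP => [_|/negbT Hj]; first by [].
    have := key G (ltn_ord i) Hj; lia.
  have Hj : 0 < j < b.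
    rewrite ltn_ord andbT lt0n; apply/negP => /eqP Hj0.
    by move: Hv; rewrite (_ : j = Ordinal b0) ?eqxx //; apply: val_inj.
  exists (inl (Ordinal (alpha_lt G Hj))); first by rewrite /= inE /= eqxx orbT.
  rewrite /= ifN //; lia.
- move=> [i|j] [i1|j1] [i2|j2] //= e1 e2 r1 r2.
    congr inr; apply: val_inj => /=.
    by rewrite -(edgeA G e1 r1) -(edgeA G e2 r2).
  congr inl; apply: val_inj => /=.
  by rewrite -(edgeB G e1 r1) -(edgeB G e2 r2).
Qed.

Definition deg (a b : nat) (E : {set Kedges a b}) (v : Kvert a b) : nat :=
  #|[set w | adjK E v w]|.

Lemma count_or (A B : pred nat) s : (forall x, x \in s -> A x -> B x -> False) ->
  count (fun x => A x || B x) s = count A s + count B s.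
Proof.
elim: s => //= x s IH H; rewrite IH; last by move=> y ys; apply: H; rewrite inE ys orbT.
case Ax: (A x); case Bx: (B x) => //=; first by case: (H x (mem_head _ _) Ax Bx).
all: lia.
Qed.

Lemma count_nth_iota (s : seq nat) (P : pred nat) :
  count (fun n => P (nth 0 s n)) (iota 0 (size s)) = count P s.
Proof. by rewrite -[in RHS](mkseq_nth 0 s) /mkseq count_map. Qed.

Lemma degA a b p q (i : 'I_a) : goodpq a b p q ->
  deg (Etree a b p q) (inl i) = nth 0 p i.
Proof.
move=> G; rewrite /deg.
have -> : [set w | adjK (Etree a b p q) (inl i) w] =
          inr @: [set j : 'I_b | (i, j) \in Etree a b p q].
  apply/setP => [[k|j]]; rewrite !inE /=.
    by apply/esym/imsetP => -[x _].
  by rewrite (mem_imset _ _ (@inr_inj _ _)) inE.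
rewrite card_imset; last exact: inr_inj.
rewrite (_ : [set j : 'I_b | (i, j) \in Etree a b p q] =
   [set j : 'I_b | (fun n => (betaf q i == n) || (alphaf a p n == i)) (val j)]); last first.
  by apply/setP => j; rewrite !inE.
rewrite cardsE (card_ord_count b (fun n => (betaf q i == n) || (alphaf a p n == i))) count_or; last first.
  by move=> n _ /eqP Hb /eqP Ha; apply: (disj G (ltn_ord i) Hb Ha).
have -> : count (fun n => betaf q i == n) (iota 0 b) = 1.
  rewrite (eq_count (a2 := pred1 (betaf q i))); last by move=> n /=; rewrite eq_sym.
  by rewrite count_uniq_mem ?iota_uniq // mem_iota /= (beta_lt G (ltn_ord i)).
have Hsz : size (a :: flatr (map predn p) 0) = b.
  by rewrite /= size_flatr (sum_csA G); have := g_ab G; lia.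
rewrite -{1}Hsz (count_nth_iota (a :: flatr (map predn p) 0) (pred1 (val i))) /=.
rewrite count_flatr leq0n subn0 (nth_map 0); last by rewrite (g_sp G).
have : 0 < nth 0 p i.
  by move/allP: (g_pp G); apply; rewrite mem_nth // (g_sp G).
rewrite (_ : (a == i) = false); last by apply/negbTE; rewrite neq_ltn ltn_ord orbT.
lia.
Qed.

Lemma degB a b p q (j : 'I_b) : goodpq a b p q ->
  deg (Etree a b p q) (inr j) = nth 0 q j.
Proof.
move=> G; rewrite /deg.
have -> : [set w | adjK (Etree a b p q) (inr j) w] =
          inl @: [set i : 'I_a | (i, j) \in Etree a b p q].
  apply/setP => [[k|k]]; rewrite !inE /=.
    by rewrite (mem_imset _ _ (@inl_inj _ _)) inE.
  by apply/esym/imsetP => -[x _].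
rewrite card_imset; last exact: inl_inj.
rewrite (_ : [set i : 'I_a | (i, j) \in Etree a b p q] = [set i : 'I_a | (betaf q i == j) || (alphaf a p j == i)]); last by apply/setP=> i; rewrite !inE.
rewrite cardsE (card_ord_count a (fun n => (betaf q n == j) || (alphaf a p j == n))) count_or; last first.
  by move=> n; rewrite mem_iota /= => Hn /eqP Hb /eqP Ha; apply: (disj G Hn Hb Ha).
have -> : count (fun n => alphaf a p j == n) (iota 0 a) = (alphaf a p j < a).
  rewrite (eq_count (a2 := pred1 (alphaf a p j))); last by move=> n /=; rewrite eq_sym.
  by rewrite count_uniq_mem ?iota_uniq // mem_iota.
have Hsz : size (flatr (csB q) 0) = a by rewrite size_flatr (sum_csB G).
rewrite -{1}Hsz (count_nth_iota (flatr (csB q) 0) (pred1 (val j))) /=.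
rewrite count_flatr leq0n subn0.
have Hj := ltn_ord j.
move: (g_sq G) (g_pq G) (alpha_lt G (j := j)) Hj; case: (q) => [|q0 q'] /=; first lia.
move=> Hq /andP[q00 Pq'] Hal.
case: (val j) Hal => [|j'] Hal Hj /=.
  rewrite alpha0 ltnn; lia.
rewrite Hal // (nth_map 0); last lia.
have Hjs : j' < size q' by lia.
have : 0 < nth 0 q' j' by exact: (allP Pq' _ (mem_nth 0 Hjs)).
lia.
Qed.

Definition isl (a b : nat) (v : Kvert a b) : bool := if v is inl _ then true else false.

Lemma adjK_side a b (E : {set Kedges a b}) u v : adjK E u v -> isl u != isl v.
Proof. by case: u => u; case: v. Qed.

Lemma iso_sides a b (E E' : {set Kedges a b}) (f : {perm Kvert a b}) :
  0 < a -> a < b -> connected_graph (adjK E) ->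
  (forall u v, adjK E u v = adjK E' (f u) (f v)) -> forall v, isl (f v) = isl v.
Proof.
move=> a0 ab Hc Hf.
pose g := [pred v : Kvert a b | isl (f v) == isl v].
have Hcl : closed (adjK E) g.
  move=> x y Exy; rewrite !inE.
  have h1 := adjK_side Exy.
  have h2 := adjK_side (etrans (esym (Hf x y)) Exy).
  by move: h1 h2; case: (isl x); case: (isl y); case: (isl (f x)); case: (isl (f y)).
pose v0 : Kvert a b := inl (Ordinal a0).
have Hall : forall v, g v = g v0.
  move=> v; have Hcv : connect (adjK E) v0 v.
    by move/forallP: Hc => /(_ v0) /forallP /(_ v).
  by have := closed_connect Hcl Hcv; rewrite !inE => ->.
case Hg0: (g v0).
  by move=> v; apply/eqP; have := Hall v; rewrite Hg0.
exfalso.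
have Hflip : forall j : 'I_b, isl (f (inr j)) by move=> j; have := Hall (inr j); rewrite Hg0 /= => /negbT; case: (isl _).
have Hsub : [set f (inr j) | j : 'I_b] \subset [set inl i | i : 'I_a].
  apply/subsetP => _ /imsetP[j _ ->].
  move: (Hflip j); case: (f (inr j)) => // i _; exact: imset_f.
have := subset_leq_card Hsub.
rewrite !card_imset ?card_ord; first lia.
- exact: inl_inj.
- by move=> x y /perm_inj []. 
Qed.

Lemma deg_iso a b (E E' : {set Kedges a b}) (f : {perm Kvert a b}) :
  (forall u v, adjK E u v = adjK E' (f u) (f v)) -> forall v, deg E v = deg E' (f v).
Proof.
move=> Hf v; rewrite /deg -[in RHS](card_preimset _ (@perm_inj _ f)).
by apply: eq_card => w; rewrite !inE Hf.
Qed.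

Lemma perm_side (T : finType) (g : T -> T) (h : T -> nat) : injective g ->
  perm_eq (map (h \o g) (enum T)) (map h (enum T)).
Proof.
move=> ig; rewrite map_comp; apply: perm_map; apply: uniq_perm.
- by rewrite (map_inj_uniq ig) enum_uniq.
- exact: enum_uniq.
- by move=> x; rewrite mem_enum; have := injF_onto ig x.
Qed.

Lemma listA a b p q : goodpq a b p q ->
  map (fun i : 'I_a => deg (Etree a b p q) (inl i)) (enum 'I_a) = p.
Proof.
move=> G; rewrite (eq_map (fun i => degA i G)).
rewrite (map_comp (nth 0 p) val) val_enum_ord -(g_sp G); exact: mkseq_nth.
Qed.

Lemma listB a b p q : goodpq a b p q ->
  map (fun j : 'I_b => deg (Etree a b p q) (inr j)) (enum 'I_b) = q.
Proof.
move=> G; rewrite (eq_map (fun j => degB j G)).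
rewrite (map_comp (nth 0 q) val) val_enum_ord -(g_sq G); exact: mkseq_nth.
Qed.

Lemma geq_sorted_eq (s1 s2 : seq nat) : sorted geq s1 -> sorted geq s2 -> perm_eq s1 s2 -> s1 = s2.
Proof.
apply: sorted_eq.
- by move=> x y z /= H1 H2; exact: leq_trans H2 H1.
- by move=> x y /andP[H1 H2]; apply/eqP; rewrite eqn_leq; apply/andP; split.
Qed.

Lemma iso_eq a b p q p' q' : goodpq a b p q -> goodpq a b p' q' ->
  graph_iso (adjK (Etree a b p q)) (adjK (Etree a b p' q')) -> p = p' /\ q = q'.
Proof.
move=> G G' [f Hf].
have Hs := iso_sides (g_a G) (g_ab G) (proj1 (Etree_tree G)) Hf.
have Hd := deg_iso Hf.
pose gA (i : 'I_a) : 'I_a := if f (inl i) is inl k then k else i.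
pose gB (j : 'I_b) : 'I_b := if f (inr j) is inr k then k else j.
have HgA : forall i, f (inl i) = inl (gA i).
  by move=> i; rewrite /gA; have := Hs (inl i); case: (f (inl i)).
have HgB : forall j, f (inr j) = inr (gB j).
  by move=> j; rewrite /gB; have := Hs (inr j); case: (f (inr j)).
have iA : injective gA.
  by move=> x y Hxy; apply: inl_inj; apply: (@perm_inj _ f); rewrite !HgA Hxy.
have iB : injective gB.
  by move=> x y Hxy; apply: inr_inj; apply: (@perm_inj _ f); rewrite !HgB Hxy.
split.
  apply: geq_sorted_eq (g_op G) (g_op G') _.
  rewrite -(listA G) -(listA G').
  rewrite (eq_map (fun i => Hd (inl i))) (eq_map (fun i => congr1 _ (HgA i))).
  exact: (perm_side (fun i => deg (Etree a b p' q') (inl i)) iA).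
apply: geq_sorted_eq (g_oq G) (g_oq G') _.
rewrite -(listB G) -(listB G').
rewrite (eq_map (fun j => Hd (inr j))) (eq_map (fun j => congr1 _ (HgB j))).
exact: (perm_side (fun j => deg (Etree a b p' q') (inr j)) iB).
Qed.

Lemma good_of_tuples a b (t1 : a.-tuple 'I_(a + b - 1).+1) (t2 : b.-tuple 'I_(a + b - 1).+1) :
  1 <= a -> a < b ->
  [&& sorted geq (map val t1), all (fun x : 'I_(a + b - 1).+1 => 0 < val x) t1
        & sumn (map val t1) == a + b - 1] ->
  [&& sorted geq (map val t2), all (fun x : 'I_(a + b - 1).+1 => 0 < val x) t2
        & sumn (map val t2) == a + b - 1] ->
  goodpq a b (map val t1) (map val t2).
Proof.
move=> Ha Hab /and3P[s1 a1 /eqP S1] /and3P[s2 a2 /eqP S2].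
by split; rewrite ?size_map ?size_tuple ?all_map.
Qed.

Theorem theorem2p3 (a b : nat) :
  2 <= a -> a < b -> Ppart a (a + b - 1) * Ppart b (a + b - 1) <= Iab a b.
Proof.
move=> Ha Hab; rewrite /Ppart /Iab -cardsX.
set SA := [set t : a.-tuple _ | _].
set SB := [set t : b.-tuple _ | _].
pose T (x : (a.-tuple 'I_(a + b - 1).+1 * b.-tuple 'I_(a + b - 1).+1)%type) :=
  Etree a b (map val x.1) (map val x.2).
pose cls (E : {set Kedges a b}) := [set E' : {set Kedges a b} | `[< spanning_tree E' >] &&
                                      `[< graph_iso (adjK E) (adjK E') >]].
have Gx : forall x, x \in setX SA SB -> goodpq a b (map val x.1) (map val x.2).
  move=> [x1 x2]; rewrite in_setX !inE /= => /andP[h1 h2].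
  apply: good_of_tuples => //; lia.
have self : forall x, x \in setX SA SB -> T x \in cls (T x).
  move=> x xin; rewrite inE; apply/andP; split; apply/asboolP.
    exact: Etree_tree (Gx x xin).
  by exists 1%g => u v; rewrite !perm1.
rewrite -(card_in_imset (f := fun x => cls (T x))); last first.
  move=> x y xin yin Heq.
  have := self y yin; rewrite -Heq inE => /andP[_ /asboolP Hiso].
  have [e1 e2] := iso_eq (Gx x xin) (Gx y yin) Hiso.
  move: x y {xin yin Heq Hiso} e1 e2 => [x1 x2] [y1 y2] /= e1 e2.
  by rewrite (val_inj (inj_map val_inj e1)) (val_inj (inj_map val_inj e2)).
apply: subset_leq_card; apply/subsetP => _ /imsetP[x xin ->].
apply: (imset_f (fun E => cls E)).
rewrite inE; apply/asboolP; exact: Etree_tree (Gx x xin).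
Qed.
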